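(* Let $X$ be a Banach space with Rolewicz' property $(\alpha)$ (in particular, any finite-dimensional $X$, or any reflexive asymptotically uniformly convex $X$). Then $X$ contains no $\mathfrak{D}$-point.
   Context: For $x\in S_X$ let $D(x)=\{x^*\in S_{X^*}:x^*(x)=1\}$, and for $x^*\in S_{X^*}$, $\varepsilon>0$ let $S(x^*,\varepsilon)=\{y\in B_X:x^*(y)>1-\varepsilon\}$. A point $x\in S_X$ is a $\mathfrak{D}$-point if $\sup_{y\in S(x^*,\varepsilon)}\|x-y\|=2$ for every $x^*\in D(x)$ and $\varepsilon>0$. Let $\alpha(A)$ denote the Kuratowski measure of non-compactness of a bounded set $A$ (the infimum of $r>0$ such that $A$ can be covered by finitely many sets of diameter at most $r$). $X$ has Rolewicz' property $(\alpha)$ if for every $x^*\in S_{X^*}$ and $\varepsilon>0$ there is $\delta>0$ with $\alpha(S(x^*,\delta))\le\varepsilon$. *)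

(* Defs.v *)
From HB Require Import structures.
From mathcomp Require Import all_boot all_order all_algebra.
From mathcomp Require Import all_classical all_reals all_analysis.
Set Implicit Arguments. Unset Strict Implicit. Unset Printing Implicit Defensive.
Import Order.TTheory GRing.Theory Num.Theory.
Import numFieldNormedType.Exports.
Local Open Scope classical_set_scope.
Local Open Scope ring_scope.

Section Defs.
Variables (R : realType) (X : normedModType R).

Definition dual_unit_sphere (f : X -> R) : Prop :=
  (forall (a : R) (u v : X), f (a *: u + v) = a * f u + f v) /\
  sup [set `|f y| | y in [set y : X | `|y| <= 1]] = 1.

Definition support_functionals (x : X) : set (X -> R) :=
  [set f | dual_unit_sphere f /\ f x = 1].

Definition slice (f : X -> R) (eps : R) : set X :=
  [set y | `|y| <= 1 /\ 1 - eps < f y].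

Definition Dpoint (x : X) : Prop :=
  `|x| = 1 /\
  forall f, support_functionals x f -> forall eps : R, 0 < eps ->
    sup [set `|x - y| | y in slice f eps] = 2.

Definition diam_le (B : set X) (r : R) : Prop :=
  forall a b, B a -> B b -> `|a - b| <= r.

Definition kuratowski (A : set X) : R :=
  inf [set r : R | 0 < r /\
        exists (n : nat) (B : nat -> set X),
          A `<=` \bigcup_(i in [set i | (i < n)%N]) B i /\
          forall i, (i < n)%N -> diam_le (B i) r].

Definition rolewicz_alpha : Prop :=
  forall f, dual_unit_sphere f -> forall eps : R, 0 < eps ->
    exists2 delta : R, 0 < delta & kuratowski (slice f delta) <= eps.
End Defs.

(* Main.v *)
Require Import Defs.
From HB Require Import structures.
From mathcomp Require Import all_boot all_order all_algebra.
From mathcomp Require Import all_classical all_reals all_analysis.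
From mathcomp Require Import ring lra.
From Stdlib Require List Lia.
Import Order.TTheory GRing.Theory Num.Theory.
Import numFieldNormedType.Exports.
Local Open Scope classical_set_scope.
Local Open Scope ring_scope.
Set Implicit Arguments. Unset Strict Implicit.


Section Lin.
Variables (R : realType) (X : normedModType R).

Definition linf (f : X -> R) := forall (a : R) (u v : X), f (a *: u + v) = a * f u + f v.

Lemma linf0 (f : X -> R) : linf f -> f 0 = 0.
Proof.
move=> lf; have := lf 1 0 0; rewrite scaler0 addr0 mul1r => h.
by apply/(addrI (f 0)); rewrite addr0 -h.
Qed.

Lemma linfZ (f : X -> R) a u : linf f -> f (a *: u) = a * f u.
Proof. by move=> lf; have := lf a u 0; rewrite addr0 linf0 // addr0. Qed.

Lemma linfD (f : X -> R) u v : linf f -> f (u + v) = f u + f v.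
Proof. by move=> lf; have := lf 1 u v; rewrite scale1r mul1r. Qed.

Lemma linfN (f : X -> R) u : linf f -> f (- u) = - f u.
Proof. by move=> lf; rewrite -scaleN1r linfZ // mulN1r. Qed.

Lemma linfB (f : X -> R) u v : linf f -> f (u - v) = f u - f v.
Proof. by move=> lf; rewrite linfD // linfN. Qed.

Lemma dus_bound (f : X -> R) : dual_unit_sphere f -> forall y, `|f y| <= `|y|.
Proof.
case=> lf hs.
have hsup : has_sup [set `|f y| | y in [set y : X | `|y| <= 1]].
  apply: contrapT => /sup_out; rewrite hs => /eqP; by rewrite oner_eq0.
have b1 : forall y, `|y| <= 1 -> `|f y| <= 1.
  move=> y hy; rewrite -hs; apply: sup_upper_bound => //; by exists y.
move=> y; have [->|y0] := eqVneq y 0; first by rewrite linf0 // !normr0.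
have ny : 0 < `|y| by rewrite normr_gt0.
have := b1 (`|y|^-1 *: y).
rewrite normrZ normrV ?unitfE ?normr_eq0 // normr_id mulVf ?normr_eq0 // lexx => /(_ isT).
rewrite linfZ // normrM normrV ?unitfE ?normr_eq0 // normr_id.
by rewrite ler_pdivrMl // mulr1.
Qed.

Lemma dus_lin (f : X -> R) : dual_unit_sphere f -> linf f.
Proof. by case. Qed.

Lemma mk_dus (g : X -> R) (v : X) : linf g -> (forall y, `|g y| <= `|y|) -> v != 0 -> g v = `|v| ->
  dual_unit_sphere g.
Proof.
move=> lg bg v0 gv; split => //.
have ne : [set `|g y| | y in [set y : X | `|y| <= 1]] !=set0.
  by exists `|g 0|, 0; rewrite //= normr0.
have ub : ubound [set `|g y| | y in [set y : X | `|y| <= 1]] 1.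
  by move=> _ [y /= hy <-]; exact: le_trans (bg y) hy.
apply/le_anti/andP; split; first exact: ge_sup.
apply: sup_upper_bound; first by split => //; exists 1.
exists (`|v|^-1 *: v).
  by rewrite /= normrZ normrV ?unitfE ?normr_eq0 // normr_id mulVf ?normr_eq0.
by rewrite linfZ // gv normrM normrV ?unitfE ?normr_eq0 // normr_id mulVf ?normr_eq0.
Qed.

End Lin.


Section HB.
Variables (R : realType) (X : normedModType R) (v : X).
Hypothesis v0 : v != 0.

Definition Pr (G : set (X * R)) :=
  [/\ G (v, `|v|),
      (forall a r b s c, G (a, r) -> G (b, s) -> G (c *: a + b, c * r + s)),
      (forall a r s, G (a, r) -> G (a, s) -> r = s) &
      (forall a r, G (a, r) -> r <= `|a|)].

Definition PG (G : set (X * R)) := G = set0 \/ Pr G.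

Lemma PG_Pr G p : PG G -> G p -> Pr G.
Proof. by case=> [->|//]. Qed.

Lemma Pr0 G : Pr G -> G (0, 0).
Proof.
case=> Gv Gc _ _; have := Gc _ _ _ _ (-1) Gv Gv.
by rewrite scaleN1r mulN1r !addNr.
Qed.

Lemma chainP : forall F : set (set (X * R)), F `<=` PG -> total_on F subset ->
  PG (\bigcup_(G in F) G).
Proof.
move=> F FP Ftot.
have [[G0 FG0 [p G0p]]|none] := pselect (exists2 G, F G & G !=set0); last first.
  left; apply/seteqP; split => // p [G FG Gp]; apply: none; exists G => //.
  by exists p.
have PG0 := PG_Pr (FP _ FG0) G0p.
have two : forall G1 G2 p q, F G1 -> F G2 -> G1 p -> G2 q ->
    exists G, [/\ F G, G p, G q & Pr G].
  move=> G1 G2 p1 q F1 F2 G1p G2q.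
  case: (Ftot _ _ F1 F2) => [s12|s21].
    by exists G2; split => //; [exact: s12 | exact: PG_Pr (FP _ F2) G2q].
  by exists G1; split => //; [exact: s21 | exact: PG_Pr (FP _ F1) G1p].
right; split.
- by exists G0 => //; case: PG0.
- move=> a r b s c [G1 F1 h1] [G2 F2 h2].
  have [G [FG Ga Gb [_ Gc _ _]]] := two _ _ _ _ F1 F2 h1 h2.
  by exists G => //; exact: Gc.
- move=> a r s [G1 F1 h1] [G2 F2 h2].
  have [G [FG Ga Gb [_ _ Gf _]]] := two _ _ _ _ F1 F2 h1 h2.
  exact: Gf Ga Gb.
- move=> a r [G1 F1 h1]; have [_ _ _ Gb] := PG_Pr (FP _ F1) h1; exact: Gb.
Qed.

Lemma hb_exists : exists g : X -> R, linf g /\ (forall y, `|g y| <= `|y|) /\ g v = `|v|.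
Proof.
have [A [PA Amax]] := Zorn_bigcup chainP.
pose B0 := [set p : X * R | exists c : R, p = (c *: v, c * `|v|)].
have PrB0 : Pr B0.
  split.
  - by exists 1; rewrite scale1r mul1r.
  - move=> a r b s c [c1 [-> ->]] [c2 [-> ->]]; exists (c * c1 + c2).
    by rewrite scalerDl scalerA mulrDl mulrA.
  - move=> a r s [c1 [-> ->]] [c2 [/eqP e1 ->]]; move: e1.
    rewrite -subr_eq0 -scalerBl scaler_eq0.
    by rewrite (negbTE v0) orbF subr_eq0 => /eqP ->.
  - move=> a r [c [-> ->]]; rewrite normrZ ler_wpM2r ?normr_ge0 //; exact: ler_norm.
have PrA : Pr A.
  case: PA => // A0; exfalso; apply: (Amax B0); last by right.
  rewrite A0; split => //; move=> /(_ (v, `|v|)); apply.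
  by exists 1; rewrite scale1r mul1r.
case: (PrA) => Av Ac Af Ab.
have A00 := Pr0 PrA.
have tot : forall u, exists r, A (u, r).
  move=> u; apply: contrapT => nu.
  pose S := [set p.2 - `|p.1 - u| | p in A].
  pose c := sup S.
  have Sne : S !=set0 by exists (`|v| - `|v - u|), (v, `|v|).
  have Sub : forall b s, A (b, s) -> ubound S (`|b + u| - s).
    move=> b s Abs _ [[a r] Aar <-] /=.
    have := Ab _ _ (Ac _ _ _ _ 1 Aar Abs); rewrite scale1r mul1r => h.
    rewrite lerBrDr addrAC lerBlDr; apply: (le_trans h).
    rewrite (_ : a + b = (a - u) + (b + u)); last by rewrite addrACA addNr addr0.
    by apply: le_trans (ler_normD _ _) _; rewrite addrC.
  have hS : has_sup S by split => //; exists (`|v + u| - `|v|); exact: Sub.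
  have cle : forall b s, A (b, s) -> c <= `|b + u| - s.
    by move=> b s Abs; apply: ge_sup => //; exact: Sub.
  have cge : forall a r, A (a, r) -> r - `|a - u| <= c.
    by move=> a r Aar; apply: sup_upper_bound => //; exists (a, r).
  pose B := [set p : X * R | exists a r t, A (a, r) /\ p = (a + t *: u, r + t * c)].
  apply: (Amax B); last first.
    right; split.
    - by exists v, `|v|, 0; rewrite scale0r mul0r !addr0.
    - move=> a1 r1 b1 s1 k [a [r [t [Aar [-> ->]]]]] [b [s [t' [Abs [-> ->]]]]].
      exists (k *: a + b), (k * r + s), (k * t + t'); split; first exact: Ac.
      congr pair.
        by rewrite scalerDl scalerDr scalerA addrACA.
      by rewrite mulrDl mulrDr mulrA addrACA.
    - move=> a0 r1 r2 [a [r [t [Aar [ea ->]]]]] [b [s [t' [Abs [eb ->]]]]].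
      rewrite ea in eb.
      have [tt|tt] := eqVneq t t'.
        rewrite tt in eb *; move/addIr: eb => ab; rewrite ab in Aar.
        by rewrite (Af _ _ _ Aar Abs).
      exfalso; apply: nu.
      have e : u = (t - t')^-1 *: (b - a).
        apply: (@scalerI _ _ (t - t')); first by rewrite subr_eq0.
        rewrite scalerA mulfV ?subr_eq0 // scale1r scalerBl.
        apply/eqP; rewrite subr_eq addrAC eq_sym subr_eq eq_sym -eb addrC.
        by [].
      have := Ac _ _ _ _ (t - t')^-1 (Ac _ _ _ _ (-1) Aar Abs) A00.
      by rewrite scaleN1r addr0 [- a + b]addrC -e => h; eexists; exact: h.
    - move=> a0 r0 [a [r [t [Aar [-> ->]]]]].
      have [t0|tn0] := eqVneq t 0.
        by rewrite t0 scale0r mul0r !addr0; exact: Ab.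
      have [tp|tn] := ltP 0 t.
        have Ab' := Ac _ _ _ _ t^-1 Aar A00; rewrite !addr0 in Ab'.
        have := cle _ _ Ab'; rewrite -(ler_pM2l tp) mulrBr mulrA mulfV // mul1r.
        rewrite -[X in X * `|_|]gtr0_norm // -normrZ scalerDr scalerA mulfV // scale1r.
        move=> h; lra.
      have sp : 0 < - t by rewrite oppr_gt0 lt_neqAle tn tn0.
      have Ab' := Ac _ _ _ _ (- t)^-1 Aar A00; rewrite !addr0 in Ab'.
      have := cge _ _ Ab'; rewrite -(ler_pM2l sp) mulrBr mulrA mulfV ?oppr_eq0 // mul1r.
      rewrite -[X in X * `|_| ]gtr0_norm // -normrZ scalerBr scalerA mulfV ?oppr_eq0 //.
      rewrite scale1r scaleNr opprK => h; lra.
  split.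
    move=> [a r] Aar; exists a, r, 0; split => //; by rewrite scale0r mul0r !addr0.
  move=> /(_ (u, c)) h; apply: nu; exists c; apply: h.
  by exists 0, 0, 1; split => //; rewrite scale1r mul1r !add0r.
have [g Ag] := choice tot.
exists g; split; last split.
- move=> a x y; apply: Af (Ag _) _; exact: Ac.
- move=> y; rewrite ler_norml Ab ?andbT //.
  have := Ab _ _ (Ac _ _ _ _ (-1) (Ag y) A00).
  by rewrite !addr0 scaleN1r mulN1r normrN lerNl.
- exact: Af (Ag v) Av.
Qed.

End HB.

Lemma hahn_banach (R : realType) (X : normedModType R) (v : X) : v != 0 ->
  exists g : X -> R, dual_unit_sphere g /\ g v = `|v|.
Proof.
move=> v0; have [g [lg [bg gv]]] := hb_exists v0.
by exists g; split => //; exact: mk_dus lg bg v0 gv.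
Qed.


Section Main.
Variables (R : realType) (X : normedModType R).

Fixpoint lsum (G : list (X -> R)) (y : X) : R :=
  match G with nil => 0 | g :: t => g y + lsum t y end.

Definition allD (x : X) (G : list (X -> R)) :=
  forall g, List.In g G -> support_functionals x g.

Lemma lsum_lin G : (forall g, List.In g G -> linf g) -> linf (lsum G).
Proof.
elim: G => [|g t IH] hG a u w /=; first by rewrite mulr0 addr0.
rewrite (hG g (or_introl erefl)) IH; last by move=> h ht; apply: hG; right.
ring.
Qed.

Lemma lsum_bound G y : (forall g, List.In g G -> forall y, `|g y| <= `|y|) ->
  `|lsum G y| <= (size G)%:R * `|y|.
Proof.
elim: G => [|g t IH] hG /=; first by rewrite normr0 mul0r.
apply: le_trans (ler_normD _ _) _; rewrite -addn1 natrD mulrDl mul1r.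
have := hG g (or_introl erefl) y; have := IH (fun k kt => hG k (or_intror kt)).
move=> H1 H2; lra.
Qed.

Lemma lsum_val G x : allD x G -> lsum G x = (size G)%:R.
Proof.
elim: G => [|g t IH] hG //=; rewrite IH; last by move=> h ht; apply: hG; right.
by rewrite (hG g (or_introl erefl)).2 -addn1 natrD addrC.
Qed.

Lemma lsum_le1 G y : (forall g, List.In g G -> g y <= 1) -> lsum G y <= (size G)%:R.
Proof.
elim: G => [|g t IH] hG //=; rewrite -addn1 natrD.
have := hG g (or_introl erefl); have := IH (fun k kt => hG k (or_intror kt)).
move=> H1 H2; lra.
Qed.

Lemma lsum_lem G y g : (forall g, List.In g G -> g y <= 1) -> List.In g G ->
  lsum G y <= g y + (size G)%:R - 1.
Proof.
elim: G => [|h t IH] hG //= [<-|gt].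
  have := lsum_le1 (fun k kt => hG k (or_intror kt)); rewrite -addn1 natrD => H; lra.
have := IH (fun k kt => hG k (or_intror kt)) gt; have := hG h (or_introl erefl).
rewrite -addn1 natrD => H1 H2; lra.
Qed.

End Main.

Section Avg.
Variables (R : realType) (X : normedModType R) (x : X) (f0 : X -> R).
Hypotheses (hx : `|x| = 1) (hf0 : support_functionals x f0).

Definition nG (G : list (X -> R)) : R := (size G).+1%:R.
Definition avg (G : list (X -> R)) (y : X) : R := (nG G)^-1 * (f0 y + lsum G y).

Lemma nG_gt0 G : 0 < nG G. Proof. by rewrite /nG ltr0n. Qed.
Lemma nGE G : nG G = (size G)%:R + 1. Proof. by rewrite /nG -addn1 natrD. Qed.

Lemma avg_D G : allD x G -> support_functionals x (avg G).
Proof.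
move=> hG.
have lG : forall g, List.In g G -> linf g by move=> g /hG [[]].
have bG : forall g, List.In g G -> forall y, `|g y| <= `|y|.
  by move=> g /hG [] /dus_bound.
have lf0 := dus_lin hf0.1; have bf0 := dus_bound hf0.1.
have n0 : nG G != 0 by rewrite gt_eqF // nG_gt0.
have ax : avg G x = 1.
  by rewrite /avg hf0.2 lsum_val // nGE addrC mulVf // nGE.
split => //.
apply: (mk_dus (v := x)).
- by move=> a u w; rewrite /avg lf0 lsum_lin //; ring.
- move=> y; rewrite /avg normrM normrV ?unitfE // gtr0_norm ?nG_gt0 //.
  rewrite ler_pdivrMl ?nG_gt0 // nGE.
  apply: le_trans (ler_normD _ _) _; have := bf0 y; have := lsum_bound y bG.
  move=> H1 H2; lra.
- by rewrite -normr_eq0 hx oner_eq0.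
- by rewrite ax hx.
Qed.

Lemma avg_big G y eta : allD x G -> `|y| <= 1 -> 1 - eta * (nG G)^-1 < avg G y ->
  forall g, List.In g (f0 :: G) -> 1 - eta < g y.
Proof.
move=> hG hy h.
have n0 : nG G != 0 by rewrite gt_eqF // nG_gt0.
have le1 : forall g, List.In g (f0 :: G) -> g y <= 1.
  move=> g gin; have dg : dual_unit_sphere g.
    by case: gin => [<-|/hG []//]; exact: hf0.1.
  have := dus_bound dg y; rewrite ler_norml => /andP[_ H]; exact: le_trans H hy.
have : nG G * (1 - eta * (nG G)^-1) < nG G * avg G y by rewrite ltr_pM2l ?nG_gt0.
rewrite /avg mulrA mulfV // mul1r mulrBr mulr1 mulrCA mulfV // mulr1 nGE => {}h.
move=> g [<-|gin].
  have := lsum_le1 (fun k kt => le1 k (or_intror kt)); move=> H; lra.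
have := lsum_lem (fun k kt => le1 k (or_intror kt)) gin.
have := le1 f0 (or_introl erefl); move=> H1 H2; lra.
Qed.

End Avg.


Section Minf.
Variable R : realType.
Fixpoint minf (h : nat -> R) (d : R) (n : nat) : R :=
  match n with 0 => d | k.+1 => Order.min (minf h d k) (h k) end.

Lemma minf_gt0 h d n : 0 < d -> (forall i, 0 < h i) -> 0 < minf h d n.
Proof. by move=> d0 h0; elim: n => //= n IH; rewrite lt_min IH h0. Qed.

Lemma minf_led h d n : minf h d n <= d.
Proof. by elim: n => //= n IH; rewrite ge_min IH. Qed.

Lemma minf_leh h d n i : (i < n)%N -> minf h d n <= h i.
Proof.
elim: n => // n IH; rewrite ltnS leq_eqVlt => /orP[/eqP ->|lt] /=.
  by rewrite ge_min lexx orbT.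
by rewrite ge_min IH.
Qed.
End Minf.

Section Main.
Variables (R : realType) (X : normedModType R) (x : X) (f0 : X -> R).
Hypotheses (hx : `|x| = 1) (hf0 : support_functionals x f0).
Hypothesis hD : Dpoint x.

Definition Q (T : set X) := forall G, allD x G -> forall eta : R, 0 < eta ->
  exists y, [/\ T y, `|y| <= 1, (forall g, List.In g (f0 :: G) -> 1 - eta < g y)
                & 2 - eta < `|x - y|].

Lemma QT : Q setT.
Proof.
move=> G hG eta eta0.
have DG := avg_D hx hf0 hG.
have e0 : 0 < eta * (nG G)^-1 by rewrite divr_gt0 ?nG_gt0.
have := hD.2 _ DG _ e0.
set S := [set _ | _ in _] => hS.
have hsup : has_sup S.
  split; first by exists `|x - x|, x; split => //; [rewrite hx | rewrite DG.2 gtrBl].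
  exists 2 => _ [y [hy _] <-]; apply: le_trans (ler_normB _ _) _; rewrite hx; lra.
have [_ [y [hy1 hy2] <-]] := sup_adherent eta0 hsup.
rewrite hS => h; exists y; split => //.
move=> g gin; have := @avg_big _ _ _ _ hf0 G y eta hG hy1. move=> H; apply: H hy2 _ gin.
Qed.


Lemma refine (ha : rolewicz_alpha X) (e : R) : 0 < e -> forall T, Q T ->
  exists T', [/\ Q T', T' `<=` T & diam_le T' e].
Proof.
move=> e0 T hT.
have e20 : 0 < e / 2 by rewrite divr_gt0.
have [d d0 hk] := ha f0 hf0.1 (e / 2) e20.
move: hk; rewrite /kuratowski; set K := [set r | _] => hk.
have Kne : K 2.
  split => //; exists 1%N, (fun _ => slice f0 d); split.
    by move=> y hy; exists 0%N.
  move=> i _ a b; rewrite /slice /= => -[ha1 _] [hb1 _]; apply: le_trans (ler_normB _ _) _; lra.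
have hinf : has_inf K.
  by split; [exists 2 | exists 0 => r [r0 _]; exact: ltW].
have [r [r0 [n [B [hcov hdiam]]]] hr] := inf_adherent e20 hinf.
have re : r <= e by lra.
suff [i [hi hQ]] : exists i, (i < n)%N /\ Q (T `&` B i).
  exists (T `&` B i); split; [exact: hQ | by move=> y [] | ].
  move=> a b; rewrite /setI /= => -[_ ha1] [_ hb1]; exact: le_trans (hdiam i hi a b ha1 hb1) re.
apply: contrapT => nex.
have w : forall i, exists p : list (X -> R) * R, (i < n)%N ->
    [/\ allD x p.1, 0 < p.2 & ~ exists y, [/\ (T `&` B i) y, `|y| <= 1,
        (forall g, List.In g (f0 :: p.1) -> 1 - p.2 < g y) & 2 - p.2 < `|x - y|]].
  move=> i; case: (ltnP i n) => hi; last first.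
    by exists ([::], 1).
  apply: contrapT => nw; apply: nex; exists i; split => // G hG eta eta0.
  apply: contrapT => ny; apply: nw; exists (G, eta) => _; split => //.
have [p hp] := choice w.
pose h i := if (i < n)%N then (p i).2 else 1.
pose Gall := List.flat_map (fun i => (p i).1) (List.seq 0 n).
pose eta := minf h d n.
have eta0 : 0 < eta.
  apply: minf_gt0 => // i; rewrite /h; case: ifP => // hi.
  by have [] := hp i hi.
have hGall : allD x Gall.
  move=> g /List.in_flat_map [i [/List.in_seq hi gi]].
  have hin : (i < n)%N by apply/ssrnat.ltP; Lia.lia.
  by have [+ _ _] := hp i hin; apply.
have [y [Ty y1 hall far]] := hT Gall hGall eta eta0.
have sl : slice f0 d y.
  rewrite /slice /=; split => //; have := hall f0 (or_introl erefl); have := minf_led h d n.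
  rewrite -/eta => H1 H2; lra.
have [i hi Biy] := hcov y sl.
have [_ _ nope] := hp i hi.
have le_i : eta <= (p i).2 by have := minf_leh h d hi; rewrite /h hi.
apply: nope; exists y; split => //.
- move=> g [<-|gi].
    have := hall f0 (or_introl erefl); lra.
  have : List.In g Gall.
    apply/List.in_flat_map; exists i; split => //; apply/List.in_seq.
    move/ssrnat.ltP: hi; Lia.lia.
  move=> gin; have := hall g (or_intror gin); lra.
- lra.
Qed.

End Main.


Unset Implicit Arguments.
Definition ik (R : realType) (k : nat) : R := k.+1%:R^-1.

Theorem corollary5p3 (R : realType) (X : completeNormedModType R) :
  rolewicz_alpha X -> forall x : X, ~ Dpoint x.
Proof.
move=> ha x hD.
have hx := hD.1.
have x0 : x != 0 by rewrite -normr_eq0 hx oner_eq0.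
have [f0 [hf0 f0x]] := hahn_banach x0; rewrite hx in f0x.
have sf0 : support_functionals x f0 by [].
pose Qx := Q x f0.
have step : forall p : nat * set X, exists T', Qx p.2 ->
    [/\ Qx T', T' `<=` p.2 & diam_le T' (ik R p.1)].
  move=> [k T]; case: (pselect (Qx T)) => hT; last by exists T.
  have e0 : 0 < ik R k by rewrite /ik invr_gt0 ltr0Sn.
  have [T' hT'] := refine sf0 ha e0 hT.
  by exists T'.
have [st hst] := choice step.
pose Ts := fix Ts k := match k with 0%N => setT | k'.+1 => st (k', Ts k') end.
have QTs : forall k, Qx (Ts k).
  elim => [|k IH]; first exact: QT.
  by have [] := hst (k, Ts k) IH.
have sub : forall k, Ts k.+1 `<=` Ts k by move=> k; have [] := hst (k, Ts k) (QTs k).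
have diam : forall k, diam_le (Ts k.+1) (ik R k).
  by move=> k; have [] := hst (k, Ts k) (QTs k).
have mono : forall k d, Ts (k + d)%N `<=` Ts k.
  move=> k; elim => [|d IH]; first by rewrite addn0.
  by rewrite addnS; apply: subset_trans (sub _) IH.
have yex : forall k, exists y, [/\ Ts k.+1 y, `|y| <= 1 & 2 - ik R k < `|x - y|].
  move=> k; have e0 : 0 < ik R k by rewrite /ik invr_gt0 ltr0Sn.
  have [y [T1 y1 _ far]] := QTs k.+1 [::] (fun g (h : List.In g [::]) => False_ind _ h) _ e0.
  by exists y.
have [y hy] := choice yex.
have cb : forall k l, (k <= l)%N -> `|y k - y l| <= ik R k.
  move=> k l kl; have [T1 _ _] := hy k; have [T2 _ _] := hy l.
  apply: diam T1 _; have := mono k.+1 (l - k)%N; rewrite addSn subnKC //.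
  by apply.
have hc : cvg (y @ \oo).
  apply: cauchy_cvg; apply: cauchy_exP => eps eps0.
  have [k hk] := ltr_add_invr eps0; rewrite add0r in hk.
  have {}hk : ik R k < eps := hk.
  exists (y k); exists k => // l /= hkl.
  rewrite -ball_normE /ball_ /=; exact: le_lt_trans (cb k l hkl) hk.
set z := lim (y @ \oo).
have hz : y @ \oo --> z := hc.
clearbody z.
have dz : forall k, `|y k - z| <= ik R k.
  move=> k; apply: (closed_cvg (closed_ball_ Num.norm (y k) (ik R k))) hz.
    exact: closed_closed_ball_.
  by exists k => // l /= hkl; rewrite /closed_ball_ /=; exact: cb.
have z1 : `|z| <= 1.
  suff : closed_ball_ Num.norm 0 1 z by rewrite /closed_ball_ /= sub0r normrN.
  apply: (closed_cvg (closed_ball_ Num.norm 0 1)) hz; first exact: closed_closed_ball_.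
  by exists 0%N => // l _; rewrite /closed_ball_ /= sub0r normrN; have [] := hy l.
have hxz : `|x - z| = 2.
  apply/le_anti/andP; split; first by apply: le_trans (ler_normB _ _) _; rewrite hx; lra.
  rewrite leNgt; apply/negP => lt.
  have h0 : 0 < (2 - `|x - z|) / 2 by rewrite divr_gt0 // subr_gt0.
  have [k hk] := ltr_add_invr h0; rewrite add0r in hk.
  have {}hk : ik R k < (2 - `|x - z|) / 2 := hk.
  have [_ _ far] := hy k; have := dz k.
  have : `|x - y k| <= `|x - z| + `|y k - z|.
    rewrite [`|y k - z|]distrC.
    by rewrite (_ : x - y k = (x - z) + (z - y k)) ?ler_normD // addrA subrK.
  move=> H1 H2; lra.
have xz0 : x - z != 0 by rewrite -normr_eq0 hxz.
have [g [hg gxz]] := hahn_banach xz0; rewrite hxz in gxz.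
have lg := dus_lin hg; have bg := dus_bound hg.
have := bg x; have := bg z; rewrite hx !ler_norml => /andP[gz1 gz2] /andP[gx1 gx2].
move: gxz; rewrite linfB // => gxz.
have gx : g x = 1 by lra.
have gz : g z = -1 by lra.
have sg : support_functionals x g by [].
have allg : allD x [:: g] by move=> h [<-|[]].
have e3 : 0 < ik R 2 by rewrite /ik invr_gt0 ltr0Sn.
have [w [Tw w1 hw _]] := QTs 3%N [:: g] allg _ e3.
have gw := hw g (or_intror (or_introl erefl)).
have [Ty _ _] := hy 2%N.
have d1 : `|w - y 2%N| <= ik R 2 := diam 2%N _ _ Tw Ty.
have d2 := dz 2%N.
have : g w - g z <= `|w - y 2%N| + `|y 2%N - z|.
  rewrite -linfB //; apply: le_trans (ler_norm _) _; apply: le_trans (bg _) _.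
  by rewrite (_ : w - z = (w - y 2%N) + (y 2%N - z)) ?ler_normD // addrA subrK.
have i3 : ik R 2 * 3 = 1 by rewrite /ik mulVf.
move=> H; lra.
Qed.
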